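(* For $i=1,2$ let $\mathbf{L}_i=(L_i,\le)$ be a finite nontrivial join-semilattice with greatest element $1$ and let $(R_i,\vee,\circ)$ be a subsemiring of $(\mathrm{JM}(\mathbf{L}_i),\vee,\circ)$ such that $k_a\in R_i$ for all $a\in L_i$, every $f\in R_i$ satisfies $k_a\le f$ for some $a\in L_i$, and for all $a\in L_i$, $b\in L_i\setminus\{1\}$ there exists $f\in R_i$ with $f(x)=b$ for $x\le a$ and $f(x)>b$ otherwise. If $(R_1,\vee,\circ)$ and $(R_2,\vee,\circ)$ are isomorphic semirings, then $\mathbf{L}_1$ and $\mathbf{L}_2$ are isomorphic.
   Context: For a finite join-semilattice $\mathbf{L}$, $\mathrm{JM}(\mathbf{L})$ is the set of maps $L\to L$ preserving binary joins, a semiring under pointwise join and composition, ordered pointwise. $k_a$ denotes the constant map with value $a$. *)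

(* Defs.v *)
From mathcomp Require Import all_boot all_order.
Set Implicit Arguments. Unset Strict Implicit. Unset Printing Implicit Defensive.
Import Order.Theory.
Local Open Scope order_scope.

Definition join_morph (d : Order.disp_t) (L : joinSemilatticeType d) (f : L -> L) : Prop :=
  forall x y : L, f (x `|` y) = f x `|` f y.

Definition fjoin (d : Order.disp_t) (L : joinSemilatticeType d) (f g : L -> L) : L -> L :=
  fun x => f x `|` g x.

Definition kconst (d : Order.disp_t) (L : joinSemilatticeType d) (a : L) : L -> L :=
  fun _ => a.

Definition fle (d : Order.disp_t) (L : joinSemilatticeType d) (f g : L -> L) : Prop :=
  forall x, f x <= g x.

Definition subsemiring_JM (d : Order.disp_t) (L : joinSemilatticeType d)
  (R : (L -> L) -> Prop) : Prop :=
  [/\ (forall f, R f -> join_morph f),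
      (exists f, R f),
      (forall f g, R f -> R g -> R (fjoin f g)) &
      (forall f g, R f -> R g -> R (f \o g))].

Definition good_subsemiring (d : Order.disp_t) (L : finTJoinSemilatticeType d)
  (R : (L -> L) -> Prop) : Prop :=
  [/\ subsemiring_JM R,
      (forall a : L, R (kconst a)),
      (forall f, R f -> exists a : L, fle (kconst a) f) &
      (forall a b : L, b != \top ->
         exists f, R f /\ (forall x, (x <= a -> f x = b) /\ (~ (x <= a) -> b < f x)))].

Definition semiring_iso (d1 d2 : Order.disp_t)
  (L1 : joinSemilatticeType d1) (L2 : joinSemilatticeType d2)
  (R1 : (L1 -> L1) -> Prop) (R2 : (L2 -> L2) -> Prop)
  (phi : (L1 -> L1) -> (L2 -> L2)) : Prop :=
  [/\ (forall f, R1 f -> R2 (phi f)),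
      (forall f g, R1 f -> R1 g -> phi f = phi g -> f = g),
      (forall h, R2 h -> exists2 f, R1 f & phi f = h),
      (forall f g, R1 f -> R1 g -> phi (fjoin f g) = fjoin (phi f) (phi g)) &
      (forall f g, R1 f -> R1 g -> phi (f \o g) = phi f \o phi g)].

Definition order_iso (d1 d2 : Order.disp_t)
  (L1 : porderType d1) (L2 : porderType d2) (h : L1 -> L2) : Prop :=
  bijective h /\ (forall x y : L1, (h x <= h y) = (x <= y)).

(* Main.v *)
Require Import Defs.
From mathcomp Require Import all_boot all_order.
Import Order.Theory.
Local Open Scope order_scope.

Theorem proposition6p5 (d1 d2 : Order.disp_t)
  (L1 : finTJoinSemilatticeType d1) (L2 : finTJoinSemilatticeType d2)
  (R1 : (L1 -> L1) -> Prop) (R2 : (L2 -> L2) -> Prop) :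
  (1 < #|L1|)%N -> (1 < #|L2|)%N ->
  good_subsemiring R1 -> good_subsemiring R2 ->
  (exists phi : (L1 -> L1) -> (L2 -> L2), semiring_iso R1 R2 phi) ->
  exists h : L1 -> L2, order_iso h.
Proof.
move=> _ _ [_ K1 _ _] [_ K2 _ _] [phi [pR pinj psurj pjoin pcomp]].
pose h := fun a : L1 => phi (kconst a) \top.
have hE : forall a, phi (kconst a) = kconst (h a).
  move=> a.
  have lz : forall g, R2 g -> phi (kconst a) \o g = phi (kconst a).
    move=> g /psurj [f Rf <-]; rewrite -pcomp //.
  by rewrite -[LHS](lz _ (K2 \top)).
have hinj : injective h.
  move=> x y hxy.
  have : kconst x = kconst y by apply: pinj => //; rewrite !hE hxy.
  by move=> e; have := congr1 (fun f => f \top) e.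
have hsurj : forall b, exists a, h a = b.
  move=> b; have [f Rf fE] := psurj _ (K2 b).
  have fc : f \o kconst \top = f.
    apply: pinj => //; first exact: (K1 (f \top)).
    by rewrite pcomp // fE.
  exists (f \top).
  have e : kconst (h (f \top)) = kconst b.
    rewrite -hE -fE -[in RHS]fc; done.
  exact: (congr1 (fun f => f \top) e).
have hjoin : forall x y, h (x `|` y) = h x `|` h y.
  move=> x y.
  have := pjoin _ _ (K1 x) (K1 y).
  rewrite /fjoin /= !hE => e.
  have := congr1 (fun f => f \top) e; done.
pose g := fun b : L2 => odflt \top [pick a | h a == b].
exists h; split.
  exists g.
    move=> a; rewrite /g; case: pickP => [a' /eqP /hinj //|/(_ a)].
    by rewrite eqxx.
  move=> b; rewrite /g; case: pickP => [a' /eqP //|H].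
  by have [a ha] := hsurj b; have := H a; rewrite ha eqxx.
move=> x y; rewrite !leEjoin -hjoin; exact: (inj_eq hinj).
Qed.
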